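(* Let $1\le m_1\le m$ and $0<e_0\le1$. For the problem $P_m, e_{i\le m_1,k}\ge e_0\mid\mid C_{\max}$, the LS-ECT schedule (for any list order) satisfies $$\frac{C_{\max}(\text{LS-ECT})}{C^*_{\max}}\le 1+\frac{1}{e_0}\left(\left\lfloor\frac{m-1}{m_1}\right\rfloor+1\right),$$ where $C^*_{\max}$ is the optimal makespan.
   Context: Shared-processing parallel machine scheduling: $m$ identical machines $M_1,\dots,M_m$, $n$ primary jobs available at time $0$ with processing times $p_j>0$, each processed without interruption on one machine, jobs on a machine processed one after another. The time axis of machine $M_i$ is partitioned into consecutive intervals $(0,t_{i,1}],(t_{i,1},t_{i,2}],\dots$ with sharing ratios $e_{i,k}\in(0,1]$; during the $k$-th interval $M_i$ processes primary work at rate $e_{i,k}$. In $P_m, e_{i\le m_1,k}\ge e_0\mid\mid C_{\max}$ all sharing ratios on machines $M_1,\dots,M_{m_1}$ are at least $e_0$, the ratios on the other machines are arbitrary in $(0,1]$, and the goal is to minimize the makespan $C_{\max}=\max_j C_j$. LS-ECT: given an ordered list of jobs, the jobs are scheduled one by one in list order; each job is appended after the jobs already assigned to some machine, choosing the machine on which it would complete earliest. *)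

(* Defs.v *)
From Stdlib Require Import Reals List Permutation Arith.
From Coquelicot Require Import Coquelicot.
Import ListNotations.
Open Scope R_scope.

(* A sharing profile of a machine: the rate function r on the time axis is
   piecewise constant: there are breakpoints 0 = t 0 < t 1 < t 2 < ...
   (unbounded, so the intervals (t k, t (k+1)] partition (0, +oo)) and
   ratios e k in (0,1] with r s = e k for s in (t k, t (k+1)]. *)
Definition sharing_profile (r : R -> R) : Prop :=
  exists (t e : nat -> R),
    t O = 0 /\
    (forall k, t k < t (S k)) /\
    (forall T, exists k, T <= t k) /\
    (forall k, 0 < e k <= 1) /\
    (forall k s, t k < s <= t (S k) -> r s = e k).

(* A job with processing time p, started at time st on a machine with rate
   profile r, completes at time c: the primary work done in [st, c] is p. *)
Definition runs (r : R -> R) (st c p : R) : Prop :=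
  st <= c /\ RInt r st c = p.

Definition makespan (n : nat) (C : nat -> R) : R :=
  fold_right Rmax 0 (map C (seq 0 n)).

Definition feasible (m n : nat) (r : nat -> R -> R) (p : nat -> R)
    (assign : nat -> nat) (S C : nat -> R) : Prop :=
  (forall j, (j < n)%nat ->
     (assign j < m)%nat /\ 0 <= S j /\ runs (r (assign j)) (S j) (C j) (p j)) /\
  (forall j j', (j < n)%nat -> (j' < n)%nat -> j <> j' ->
     assign j = assign j' -> C j <= S j' \/ C j' <= S j).

Definition mfinish (assign : nat -> nat) (C : nat -> R) (done_ : list nat)
    (i : nat) : R :=
  fold_right Rmax 0 (map C (filter (fun j => Nat.eqb (assign j) i) done_)).

(* (assign, S, C) is a schedule produced by LS-ECT on the list [ord]
   (with arbitrary tie-breaking): the k-th job of the list is appended after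
   the jobs already assigned to some machine, namely one on which it would
   complete earliest. *)
Definition ls_ect (m : nat) (r : nat -> R -> R) (p : nat -> R)
    (ord : list nat) (assign : nat -> nat) (S C : nat -> R) : Prop :=
  forall k, (k < length ord)%nat ->
    let j := nth k ord O in
    let done_ := firstn k ord in
    (assign j < m)%nat /\
    S j = mfinish assign C done_ (assign j) /\
    runs (r (assign j)) (S j) (C j) (p j) /\
    (forall i c', (i < m)%nat ->
       runs (r i) (mfinish assign C done_ i) c' (p j) -> C j <= c').

(* Main.v *)
Require Import Defs.
From Stdlib Require Import Reals List Permutation Arith Lra Lia.
From Coquelicot Require Import Coquelicot.
Import ListNotations.
Open Scope R_scope.

Lemma sp_t_nonneg (t : nat -> R) : t O = 0 -> (forall k, t k < t (S k)) -> forall k, 0 <= t k.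
Proof. intros H0 Hs k; induction k; [lra|]. specialize (Hs k); lra. Qed.

Lemma sp_val r : sharing_profile r -> forall s, 0 < s -> 0 < r s <= 1.
Proof.
  intros (t & e & H0 & Hs & Hu & He & Hr) s Hspos.
  destruct (Hu s) as [k Hk].
  assert (exists k', t k' < s <= t (S k')) as [k' Hk'].
  { induction k as [|k IH].
    - lra.
    - destruct (Rle_dec s (t k)) as [h|h]. apply IH; exact h.
      exists k; lra. }
  rewrite (Hr k' s Hk'). apply He.
Qed.

Lemma sp_ex0 r : sharing_profile r -> forall T, 0 <= T -> ex_RInt r 0 T.
Proof.
  intros Hp. pose proof Hp as (t & e & H0 & Hs & Hu & He & Hr).
  assert (Hk : forall k, ex_RInt r 0 (t k)).
  { induction k.
    - rewrite H0. apply (ex_RInt_ext (fun _ => 0)).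
      + intros x. rewrite Rmin_left, Rmax_left; lra.
      + apply ex_RInt_const.
    - apply (ex_RInt_Chasles _ _ (t k)); auto.
      apply (ex_RInt_ext (fun _ => e k)).
      + intros x. pose proof (Hs k). rewrite Rmin_left, Rmax_right by lra.
        intros; symmetry; apply Hr; lra.
      + apply ex_RInt_const. }
  intros T HT. destruct (Hu T) as [k Hkk].
  apply (@ex_RInt_Chasles_1 R_CompleteNormedModule r 0 T (t k)); auto.
Qed.

Lemma sp_ex r : sharing_profile r -> forall a b, 0 <= a -> a <= b -> ex_RInt r a b.
Proof.
  intros Hp a b Ha Hab.
  apply (@ex_RInt_Chasles_2 R_CompleteNormedModule r 0 a b); [lra|]. apply sp_ex0; auto; lra.
Qed.

Lemma RInt_cst_R (a b c : R) : RInt (fun _ => c) a b = (b - a) * c.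
Proof. rewrite RInt_const. reflexivity. Qed.

Lemma sp_bounds r : sharing_profile r -> forall a b, 0 <= a -> a <= b ->
  0 <= RInt r a b <= b - a.
Proof.
  intros Hp a b Ha Hab. split.
  - rewrite <- (Rmult_0_r (b - a)) at 1. rewrite <- (RInt_cst_R a b 0).
    apply RInt_le; auto. apply ex_RInt_const. apply sp_ex; auto.
    intros x Hx. pose proof (sp_val r Hp x); lra.
  - rewrite <- (Rmult_1_r (b - a)) at 1. rewrite <- (RInt_cst_R a b 1).
    apply RInt_le; auto. apply sp_ex; auto. apply ex_RInt_const.
    intros x Hx. pose proof (sp_val r Hp x); lra.
Qed.

Lemma sp_lower r e0 : sharing_profile r -> (forall s, 0 < s -> e0 <= r s) ->
  forall a b, 0 <= a -> a <= b -> e0 * (b - a) <= RInt r a b.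
Proof.
  intros Hp Hg a b Ha Hab.
  rewrite Rmult_comm, <- (RInt_cst_R a b e0).
  apply RInt_le; auto. apply ex_RInt_const. apply sp_ex; auto.
  intros x Hx. apply Hg; lra.
Qed.

Lemma sp_chasles r : sharing_profile r -> forall a b c, 0 <= a -> a <= b -> b <= c ->
  RInt r a b + RInt r b c = RInt r a c.
Proof.
  intros Hp a b c Ha Hab Hbc.
  rewrite <- (RInt_Chasles r a b c); try (apply sp_ex; auto; lra). reflexivity.
Qed.

Lemma clamp_lip F B x y : F <= B ->
  Rabs (Rmax F (Rmin y B) - Rmax F (Rmin x B)) <= Rabs (y - x).
Proof.
  intros. unfold Rmax, Rmin; repeat destruct Rle_dec; unfold Rabs; repeat destruct Rcase_abs; lra.
Qed.

Lemma sp_lip r : sharing_profile r -> forall F u v, 0 <= F -> F <= u -> F <= v ->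
  Rabs (RInt r F v - RInt r F u) <= Rabs (v - u).
Proof.
  intros Hp F u v HF Hu Hv.
  destruct (Rle_dec u v).
  - rewrite <- (sp_chasles r Hp F u v) by lra.
    pose proof (sp_bounds r Hp u v ltac:(lra) r0).
    unfold Rabs; repeat destruct Rcase_abs; lra.
  - rewrite <- (sp_chasles r Hp F v u) by lra.
    pose proof (sp_bounds r Hp v u ltac:(lra) ltac:(lra)).
    unfold Rabs; repeat destruct Rcase_abs; lra.
Qed.

Lemma sp_solve r e0 : sharing_profile r -> (forall s, 0 < s -> e0 <= r s) -> 0 < e0 ->
  forall F p, 0 <= F -> 0 <= p -> exists c, F <= c <= F + p / e0 /\ RInt r F c = p.
Proof.
  intros Hp Hg He0 F p HF Hpp.
  set (B := F + p / e0).
  assert (HFB : F <= B). { unfold B. assert (0 <= p / e0) by (apply Rdiv_le_0_compat; lra). lra. }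
  set (g := fun x => RInt r F (Rmax F (Rmin x B))).
  assert (Hc : continuity g).
  { intros x0. unfold continuity_pt, continue_in, limit1_in, limit_in. intros eps Heps.
    exists eps. split; auto. intros y [_ Hy]. simpl in *. unfold R_dist in *.
    eapply Rle_lt_trans; [|exact Hy]. unfold g.
    eapply Rle_trans; [apply sp_lip; auto|].
    - apply Rmax_l.
    - apply Rmax_l.
    - apply clamp_lip; auto. }
  assert (HgF : g F = 0).
  { unfold g. rewrite Rmin_left by lra. rewrite Rmax_left by lra. exact (@RInt_point R_CompleteNormedModule F r). }
  assert (HgB : p <= g B).
  { unfold g. rewrite Rmin_right by lra. rewrite Rmax_right by lra.
    eapply Rle_trans; [|apply (sp_lower r e0 Hp Hg); lra].
    unfold B. right. field. lra. }
  destruct (IVT_gen g F B p Hc) as [x [Hx Hgx]].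
  - rewrite HgF. rewrite Rmin_left, Rmax_right; lra.
  - rewrite Rmin_left, Rmax_right in Hx by lra.
    exists x. split. exact Hx. unfold g in Hgx.
    rewrite Rmin_left, Rmax_right in Hgx by lra. exact Hgx.
Qed.

Fixpoint sumN (M : nat) (f : nat -> R) : R :=
  match M with O => 0 | S M' => sumN M' f + f M' end.

Definition sumR (l : list nat) (f : nat -> R) : R :=
  fold_right (fun j acc => f j + acc) 0 l.

Lemma sumN_ext M f g : (forall i, (i < M)%nat -> f i = g i) -> sumN M f = sumN M g.
Proof. induction M; simpl; intros H; auto. rewrite IHM by (intros; apply H; lia). rewrite (H M) by lia. auto. Qed.

Lemma sumN_le M f g : (forall i, (i < M)%nat -> f i <= g i) -> sumN M f <= sumN M g.
Proof. induction M; simpl; intros H; [lra|]. pose proof (H M ltac:(lia)). pose proof (IHM ltac:(intros; apply H; lia)). lra. Qed.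

Lemma sumN_plus M f g : sumN M (fun i => f i + g i) = sumN M f + sumN M g.
Proof. induction M; simpl; [lra|]. rewrite IHM; lra. Qed.

Lemma sumN_const M c : sumN M (fun _ => c) = INR M * c.
Proof. induction M; simpl sumN; [simpl; lra|]. rewrite IHM, S_INR; lra. Qed.

Lemma sumN_ind0 M a v : (M <= a)%nat -> sumN M (fun i => if Nat.eqb a i then v else 0) = 0.
Proof.
  induction M; simpl; intros; auto.
  rewrite IHM by lia. destruct (Nat.eqb_spec a M); [lia|lra].
Qed.

Lemma sumN_ind M a v : (a < M)%nat -> sumN M (fun i => if Nat.eqb a i then v else 0) = v.
Proof.
  induction M; simpl; intros; [lia|].
  destruct (Nat.eqb_spec a M).
  - subst. rewrite sumN_ind0 by lia. lra.
  - rewrite IHM by lia. lra.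
Qed.

Lemma sumN_change M f f' a d :
  (forall i, i <> a -> f' i = f i) -> f' a = f a + d -> 0 <= d ->
  sumN M f' <= sumN M f + d.
Proof.
  intros H1 H2 H3.
  assert (forall M, ((M <= a)%nat -> sumN M f' = sumN M f) /\ sumN M f' <= sumN M f + d).
  { induction M0; simpl.
    - split; intros; lra.
    - destruct IHM0 as [A B]. destruct (Nat.eq_dec M0 a).
      + subst. rewrite A by lia. split; [intros; lia|]. rewrite H2; lra.
      + rewrite (H1 M0 n). split; [intros; rewrite A by lia; lra|]. lra. }
  apply H.
Qed.

Lemma sumN_split m1 d f T : (forall i, (m1 <= i < m1 + d)%nat -> f i <= T) ->
  sumN (m1 + d) f <= sumN m1 f + INR d * T.
Proof.
  induction d; intros H.
  - rewrite Nat.add_0_r. simpl. lra.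
  - rewrite Nat.add_succ_r. simpl sumN. rewrite S_INR.
    pose proof (H (m1 + d)%nat ltac:(lia)). pose proof (IHd ltac:(intros; apply H; lia)). lra.
Qed.

Lemma sumR_app l1 l2 f : sumR (l1 ++ l2) f = sumR l1 f + sumR l2 f.
Proof. induction l1; simpl; [lra|]. unfold sumR in *. simpl. rewrite IHl1. lra. Qed.

Lemma sumR_nonneg l f : (forall j, In j l -> 0 <= f j) -> 0 <= sumR l f.
Proof. induction l; simpl; intros H; [lra|]. pose proof (H a (or_introl eq_refl)).
  assert (0 <= sumR l f) by (apply IHl; intros; apply H; simpl; auto).
  unfold sumR in *; simpl; lra. Qed.

Lemma sumR_perm l l' f : Permutation l l' -> sumR l f = sumR l' f.
Proof. intros HP; induction HP; unfold sumR in *; simpl; lra. Qed.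

Lemma sumR_decomp (asg : nat -> nat) m l f : (forall j, In j l -> (asg j < m)%nat) ->
  sumR l f = sumN m (fun i => sumR (filter (fun j => Nat.eqb (asg j) i) l) f).
Proof.
  induction l as [|x l IH]; intros H.
  - simpl. transitivity (sumN m (fun _ => 0)).
    + rewrite sumN_const. unfold sumR; simpl; lra.
    + apply sumN_ext; auto.
  - rewrite (sumN_ext m _ (fun i => (if Nat.eqb (asg x) i then f x else 0) +
       sumR (filter (fun j => Nat.eqb (asg j) i) l) f)).
    + rewrite sumN_plus, sumN_ind by (apply H; simpl; auto).
      rewrite <- IH by (intros; apply H; simpl; auto). unfold sumR; simpl; lra.
    + intros i _. simpl. destruct (Nat.eqb (asg x) i); unfold sumR; simpl; lra.
Qed.

Lemma fold_max_nonneg (l : list R) : 0 <= fold_right Rmax 0 l.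
Proof. induction l; simpl; [lra|]. eapply Rle_trans; [exact IHl|apply Rmax_r]. Qed.

Lemma fold_max_ge (l : list R) x : In x l -> x <= fold_right Rmax 0 l.
Proof. induction l; simpl; intros H; [tauto|]. destruct H.
  subst; apply Rmax_l. eapply Rle_trans; [apply IHl; auto|apply Rmax_r]. Qed.

Lemma fold_max_le (l : list R) B : 0 <= B -> (forall x, In x l -> x <= B) -> fold_right Rmax 0 l <= B.
Proof. induction l; simpl; intros H0 H; auto. apply Rmax_lub; auto. Qed.

Lemma fold_max_app (l : list R) x : 0 <= x -> fold_right Rmax 0 (l ++ [x]) = Rmax (fold_right Rmax 0 l) x.
Proof.
  intros Hx. induction l; simpl.
  - rewrite Rmax_left by lra. rewrite Rmax_right; lra.
  - rewrite IHl. rewrite Rmax_assoc. auto.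
Qed.

Lemma firstn_S_nth (l : list nat) k d : (k < length l)%nat ->
  firstn (S k) l = firstn k l ++ [nth k l d].
Proof.
  revert k; induction l; simpl; intros k Hk; [lia|].
  destruct k; simpl; auto. f_equal. rewrite <- IHl by lia. reflexivity.
Qed.

Lemma argmin_exists (M : nat) (F : nat -> R) : (1 <= M)%nat ->
  exists i0, (i0 < M)%nat /\ forall i, (i < M)%nat -> F i0 <= F i.
Proof.
  induction M; intros H; [lia|].
  destruct (Nat.eq_dec M 0).
  - subst. exists 0%nat. split; auto. intros i Hi. replace i with 0%nat by lia. lra.
  - destruct IHM as [i0 [Hi0 Hm]]; [lia|].
    destruct (Rle_dec (F i0) (F M)).
    + exists i0. split; [lia|]. intros i Hi. destruct (Nat.eq_dec i M); [subst; auto|apply Hm; lia].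
    + exists M. split; [lia|]. intros i Hi. destruct (Nat.eq_dec i M); [subst; lra|].
      pose proof (Hm i ltac:(lia)). lra.
Qed.

Lemma max_elem (f : nat -> R) (a : nat) l : exists x, In x (a :: l) /\ forall y, In y (a :: l) -> f y <= f x.
Proof.
  revert a; induction l as [|b l IH]; intros a.
  - exists a. split; [simpl; auto|]. intros y [H|H]; [subst; lra|inversion H].
  - destruct (IH b) as [x [Hx Hm]].
    destruct (Rle_dec (f a) (f x)).
    + exists x. split; [simpl; auto|]. intros y [H|H]; [subst; auto|apply Hm; auto].
    + exists a. split; [simpl; auto|]. intros y [H|H]; [subst; lra|].
      pose proof (Hm y H); lra.
Qed.

Lemma mach_opt m n r p assign' S' C'
  (Hsp : forall i, (i < m)%nat -> sharing_profile (r i))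
  (Hp : forall j, (j < n)%nat -> 0 < p j)
  (Hf : feasible m n r p assign' S' C') i (Hi : (i < m)%nat) :
  forall len l, (length l <= len)%nat -> NoDup l ->
  (forall j, In j l -> (j < n)%nat /\ assign' j = i) ->
  forall Tm, 0 <= Tm -> (forall j, In j l -> C' j <= Tm) ->
  sumR l p <= RInt (r i) 0 Tm.
Proof.
  destruct Hf as [Hf1 Hf2].
  induction len; intros l Hl Hnd Hin Tm HT HC.
  - destruct l; [|simpl in Hl; lia]. unfold sumR; simpl.
    apply (sp_bounds (r i) (Hsp i Hi)); lra.
  - destruct l as [|a l0].
    + unfold sumR; simpl. apply (sp_bounds (r i) (Hsp i Hi)); lra.
    + destruct (max_elem C' a l0) as [x [Hx Hmax]].
      destruct (in_split x (a :: l0) Hx) as [l1 [l2 Hsplit]].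
      rewrite Hsplit in *.
      destruct (Hin x ltac:(apply in_or_app; simpl; auto)) as [Hxn Hxa].
      destruct (Hf1 x Hxn) as [_ [HS0 [HSC HR]]]. rewrite Hxa in HR.
      assert (HS0' : 0 <= S' x) by lra.
      assert (IHs : sumR (l1 ++ l2) p <= RInt (r i) 0 (S' x)).
      { apply IHlen; auto.
        - rewrite length_app in *; simpl in Hl; lia.
        - eapply NoDup_remove_1; eauto.
        - intros j Hj. apply Hin. apply in_app_or in Hj; apply in_or_app; simpl; tauto.
        - intros y Hy.
          assert (Hy' : In y (l1 ++ x :: l2)) by (apply in_app_or in Hy; apply in_or_app; simpl; tauto).
          assert (Hyx : y <> x) by (intro; subst; eapply NoDup_remove_2; eauto).
          destruct (Hin y Hy') as [Hyn Hya].
          destruct (Hf2 y x Hyn Hxn Hyx ltac:(congruence)) as [h|h]; auto.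
          exfalso. pose proof (Hmax y Hy').
          destruct (Hf1 y Hyn) as [_ [_ [HyS HyR]]].
          assert (S' y = C' y) by lra. rewrite H0 in HyR.
          pose proof (Hp y Hyn).
          rewrite (@RInt_point R_CompleteNormedModule) in HyR. simpl in HyR. unfold zero in HyR. simpl in HyR. lra. }
      rewrite sumR_app. simpl. unfold sumR at 2. simpl. fold (sumR l2 p).
      pose proof (sumR_app l1 l2 p).
      assert (Hsp' := Hsp i Hi).
      pose proof (sp_chasles (r i) Hsp' 0 (S' x) (C' x) ltac:(lra) HS0' HSC).
      assert (HxT : C' x <= Tm) by (apply HC; apply in_or_app; simpl; auto).
      pose proof (sp_chasles (r i) Hsp' 0 (C' x) Tm ltac:(lra) ltac:(lra) HxT).
      pose proof (sp_bounds (r i) Hsp' (C' x) Tm ltac:(lra) HxT).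
      lra.
Qed.

Lemma mfinish_nonneg assign C l i : 0 <= mfinish assign C l i.
Proof. unfold mfinish. apply fold_max_nonneg. Qed.

Lemma F_step m r p ord assign St C : ls_ect m r p ord assign St C ->
  forall k, (k < length ord)%nat -> forall i,
  mfinish assign C (firstn (S k) ord) i =
  if Nat.eqb (assign (nth k ord O)) i then C (nth k ord O) else mfinish assign C (firstn k ord) i.
Proof.
  intros Hls k Hk i.
  destruct (Hls k Hk) as [_ [HS [[HSC _] _]]].
  pose proof (mfinish_nonneg assign C (firstn k ord) (assign (nth k ord O))).
  unfold mfinish in *. rewrite (firstn_S_nth ord k O) by auto. rewrite filter_app. simpl filter.
  destruct (Nat.eqb_spec (assign (nth k ord O)) i).
  - rewrite map_app. simpl map. rewrite fold_max_app by lra. subst i.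
    rewrite Rmax_right; auto. lra.
  - rewrite app_nil_r. auto.
Qed.

Lemma ls_inv m m1 r p ord assign St C :
  (forall i, (i < m)%nat -> sharing_profile (r i)) ->
  (forall j, In j ord -> 0 <= p j) ->
  ls_ect m r p ord assign St C ->
  forall k, (k <= length ord)%nat ->
  sumN m1 (fun i => RInt (r i) 0 (mfinish assign C (firstn k ord) i)) <= sumR (firstn k ord) p.
Proof.
  intros Hsp Hp Hls k. induction k; intros Hk.
  - simpl. unfold mfinish. simpl.
    transitivity (sumN m1 (fun _ => 0)).
    + right. apply sumN_ext. intros. exact (@RInt_point R_CompleteNormedModule 0 (r i)).
    + rewrite sumN_const. unfold sumR; simpl; lra.
  - assert (Hk' : (k < length ord)%nat) by lia.
    set (j := nth k ord O).
    destruct (Hls k Hk') as [Ha [HS [[HSC HR] _]]]. fold j in Ha, HS, HSC, HR.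
    rewrite (firstn_S_nth ord k O) by auto. rewrite sumR_app. fold j.
    replace (sumR [j] p) with (p j) by (unfold sumR; simpl; lra).
    eapply Rle_trans; [|apply Rplus_le_compat_r; apply IHk; lia].
    unfold j; rewrite <- (firstn_S_nth ord k O) by auto; fold j.
    apply (sumN_change m1 _ _ (assign j) (p j)).
    + intros i Hi. rewrite (F_step m r p ord assign St C Hls k Hk' i). fold j.
      destruct (Nat.eqb_spec (assign j) i); [congruence|auto].
    + rewrite (F_step m r p ord assign St C Hls k Hk' (assign j)). fold j.
      rewrite Nat.eqb_refl. rewrite <- HS.
      pose proof (mfinish_nonneg assign C (firstn k ord) (assign j)).
      rewrite <- (sp_chasles (r (assign j)) (Hsp _ Ha) 0 (St j) (C j)) by lra.
      rewrite HR. reflexivity.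
    + apply Hp. apply nth_In. auto.
Qed.

Lemma nat_bound m m1 : (1 <= m1)%nat -> (1 <= m)%nat -> (m <= m1 * ((m - 1) / m1 + 1))%nat.
Proof.
  intros H1 H2.
  pose proof (Nat.div_mod (m - 1) m1 ltac:(lia)).
  pose proof (Nat.mod_upper_bound (m - 1) m1 ltac:(lia)).
  nia.
Qed.

Theorem theorem3 :
  forall (m m1 n : nat) (e0 : R) (r : nat -> R -> R) (p : nat -> R)
    (ord : list nat) (assign : nat -> nat) (S C : nat -> R),
    (1 <= m1)%nat -> (m1 <= m)%nat ->
    0 < e0 -> e0 <= 1 ->
    (forall i, (i < m)%nat -> sharing_profile (r i)) ->
    (forall i, (i < m1)%nat -> forall s, 0 < s -> e0 <= r i s) ->
    (forall j, (j < n)%nat -> 0 < p j) ->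
    Permutation ord (seq 0 n) ->
    ls_ect m r p ord assign S C ->
    forall (assign' : nat -> nat) (S' C' : nat -> R),
      feasible m n r p assign' S' C' ->
      makespan n C
        <= (1 + / e0 * (INR ((m - 1) / m1) + 1)) * makespan n C'.
Proof.
  intros m m1 n e0 r p ord assign St C Hm1 Hm1m He0 He01 Hsp Hgood Hp Hperm Hls assign' S' C' Hf.
  set (T := makespan n C').
  assert (HT0 : 0 <= T) by apply fold_max_nonneg.
  assert (HCT : forall j, (j < n)%nat -> C' j <= T).
  { intros j Hj. apply fold_max_ge. apply in_map. apply in_seq. lia. }
  assert (Hpj : forall j, (j < n)%nat -> p j <= T).
  { intros j Hj. destruct (proj1 Hf j Hj) as [Ha [HS0 [HSC HR]]].
    pose proof (sp_bounds _ (Hsp _ Ha) (S' j) (C' j) HS0 HSC). pose proof (HCT j Hj). lra. }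
  assert (Hord : forall j, In j ord -> (j < n)%nat).
  { intros j Hj. apply (Permutation_in _ Hperm) in Hj. apply in_seq in Hj. lia. }
  assert (Hpord : forall j, In j ord -> 0 <= p j).
  { intros j Hj. apply Rlt_le, Hp, Hord, Hj. }
  set (cap := fun i => RInt (r i) 0 T).
  assert (Hopt : sumR ord p <= sumN m cap).
  { rewrite (sumR_perm _ _ p Hperm).
    rewrite (sumR_decomp assign' m).
    - apply sumN_le. intros i Hi. unfold cap.
      apply (mach_opt m n r p assign' S' C' Hsp Hp Hf i Hi (length (filter (fun j => Nat.eqb (assign' j) i) (seq 0 n)))); auto.
      + apply NoDup_filter, seq_NoDup.
      + intros j Hj. apply filter_In in Hj as [Hj1 Hj2]. apply in_seq in Hj1.
        apply Nat.eqb_eq in Hj2. split; [lia|auto].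
      + intros j Hj. apply filter_In in Hj as [Hj1 _]. apply in_seq in Hj1. apply HCT; lia.
    - intros j Hj. apply in_seq in Hj. apply (proj1 Hf j). lia. }
  assert (Hsplit : sumN m cap <= sumN m1 cap + INR (m - m1) * T).
  { replace m with (m1 + (m - m1))%nat at 1 by lia. apply sumN_split.
    intros i Hi. unfold cap. pose proof (sp_bounds _ (Hsp i ltac:(lia)) 0 T ltac:(lra) HT0). lra. }
  set (Q := INR ((m - 1) / m1)).
  assert (HQ : INR m <= INR m1 * (Q + 1)).
  { unfold Q. rewrite <- S_INR, <- mult_INR. apply le_INR.
    replace (S ((m - 1) / m1)) with ((m - 1) / m1 + 1)%nat by lia. apply nat_bound; lia. }
  assert (HQ0 : 0 <= Q) by apply pos_INR.
  assert (Hm1R : 1 <= INR m1) by (apply (le_INR 1); lia).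
  assert (HmR : INR (m - m1) = INR m - INR m1) by (apply minus_INR; lia).
  assert (Hie0 : 0 < / e0) by (apply Rinv_0_lt_compat; lra).
  assert (Hbound : forall k, (k < length ord)%nat ->
            C (nth k ord O) <= (1 + / e0 * (Q + 1)) * T).
  { intros k Hk. set (j := nth k ord O).
    assert (Hjn : (j < n)%nat) by (apply Hord; apply nth_In; auto).
    set (Fk := fun i => mfinish assign C (firstn k ord) i).
    destruct (argmin_exists m1 Fk Hm1) as [i0 [Hi0 Hmin]].
    set (F := Fk i0).
    assert (HF0 : 0 <= F) by apply mfinish_nonneg.
    pose proof (Hp j Hjn) as Hpjpos. pose proof (Hpj j Hjn) as HpjT.
    destruct (sp_solve (r i0) e0 (Hsp i0 ltac:(lia)) (Hgood i0 Hi0) He0 F (p j) HF0 ltac:(lra))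
      as [c [Hc HRc]].
    assert (HCj : C j <= c).
    { destruct (Hls k Hk) as [_ [_ [_ Hect]]]. apply (Hect i0 c ltac:(lia)).
      split; [unfold F, Fk in Hc; lra|exact HRc]. }
    assert (Hcj : C j <= F + p j * / e0) by (unfold Rdiv in Hc; lra).
    assert (Hgoal : e0 * C j <= e0 * T + (Q + 1) * T).
    { destruct (Rle_dec F T) as [HFT|HFT].
      - assert (e0 * C j <= e0 * F + p j).
        { replace (e0 * F + p j) with (e0 * (F + p j * / e0)) by (field; lra).
          apply Rmult_le_compat_l; lra. }
        assert (e0*F <= e0*T) by (apply Rmult_le_compat_l; lra). assert (0 <= Q*T) by (apply Rmult_le_pos; lra). lra.
      - apply Rnot_le_lt in HFT. assert (Hlow : sumN m1 cap + INR m1 * (e0 * (F - T)) <=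
                       sumN m1 (fun i => RInt (r i) 0 (Fk i))).
        { rewrite <- sumN_const, <- sumN_plus. apply sumN_le. intros i Hi.
          pose proof (Hmin i Hi) as Hmi. change (Fk i0) with F in Hmi.
          assert (HFi : 0 <= Fk i) by apply mfinish_nonneg.
          rewrite <- (sp_chasles (r i) (Hsp i ltac:(lia)) 0 T (Fk i)) by lra.
          pose proof (sp_lower (r i) e0 (Hsp i ltac:(lia)) (Hgood i Hi) T (Fk i) HT0 ltac:(lra)).
          unfold cap. nra. }
        pose proof (ls_inv m m1 r p ord assign St C Hsp Hpord Hls k ltac:(lia)) as Hinv.
        assert (Hrest : sumR (firstn k ord) p + p j <= sumR ord p).
        { rewrite <- (firstn_skipn (Datatypes.S k) ord) at 2.
          rewrite sumR_app, (firstn_S_nth ord k O) by auto. rewrite sumR_app. fold j.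
          assert (0 <= sumR (skipn (Datatypes.S k) ord) p).
          { apply sumR_nonneg. intros x Hx. apply Hpord. rewrite <- (firstn_skipn (Datatypes.S k) ord). apply in_or_app; right; auto. }
          replace (sumR [j] p) with (p j) by (unfold sumR; simpl; lra). lra. }
        assert (Hkey : INR m1 * (e0 * (F - T)) + p j <= (INR m - INR m1) * T).
        { unfold Fk in Hlow; cbv beta in Hlow. rewrite HmR in Hsplit. lra. }
        assert (e0 * C j <= e0 * F + p j).
        { replace (e0 * F + p j) with (e0 * (F + p j * / e0)) by (field; lra).
          apply Rmult_le_compat_l; lra. }
        assert (HA : INR m1 * (e0 * C j) <= INR m1 * (e0 * T) + (INR m - 1) * T).
        { assert (INR m1 * (e0 * C j) <= INR m1 * (e0 * F + p j)) by (apply Rmult_le_compat_l; lra).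
          assert ((INR m1 - 1) * p j <= (INR m1 - 1) * T) by (apply Rmult_le_compat_l; lra).
          nra. }
        assert (HB : (INR m - 1) * T <= INR m1 * (Q + 1) * T) by (apply Rmult_le_compat_r; lra).
        assert (HC : INR m1 * (e0 * C j) <= INR m1 * (e0 * T + (Q + 1) * T)) by nra.
        apply Rmult_le_reg_l in HC; lra. }
    replace ((1 + / e0 * (Q + 1)) * T) with (/ e0 * (e0 * T + (Q + 1) * T)) by (field; lra).
    replace (C j) with (/ e0 * (e0 * C j)) by (field; lra).
    apply Rmult_le_compat_l; lra. }
  apply fold_max_le.
  - apply Rmult_le_pos; auto. nra.
  - intros x Hx. apply in_map_iff in Hx as [j [Hxj Hj]]. subst x.
    apply in_seq in Hj.
    assert (Hjo : In j ord) by (apply (Permutation_in _ (Permutation_sym Hperm)); apply in_seq; lia).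
    destruct (In_nth ord j O Hjo) as [k [Hk Hkj]].
    rewrite <- Hkj. apply Hbound; auto.
Qed.
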